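(* Let $T$ be a tree on $n$ vertices. Then \[ D_{\max}(T)-\partial(T)\geq \frac{2n-2-\sqrt{4n^2-12n+12}}{2} \] and \[ 2D_{\max}(T)-\partial^Q(T)\geq \frac{3n-4-\sqrt{9n^2-32n+32}}{2}, \] with equality (in either inequality) if and only if $T\cong K_{1,n-1}$.
   Context: For a connected graph $G$ with vertex set $\{v_1,\dots,v_n\}$, the distance matrix $D(G)$ is the $n\times n$ matrix whose $(i,j)$-entry is the distance between $v_i$ and $v_j$, and $\partial(G)$ denotes its largest eigenvalue (the distance spectral radius). The transmission $D_i$ of $v_i$ is the $i$-th row sum of $D(G)$, and $D_{\max}(G)$ is the maximum transmission over all vertices. The distance signless Laplacian matrix is $Q(G)=D(G)+\mathrm{diag}(D_1,\dots,D_n)$, and $\partial^Q(G)$ denotes its largest eigenvalue. $K_{1,n-1}$ is the star on $n$ vertices. *)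

(* Defs.v *)
From HB Require Import structures.
From mathcomp Require Import all_boot all_order all_algebra perm.
From mathcomp Require Import classical_sets reals.
Set Implicit Arguments. Unset Strict Implicit. Unset Printing Implicit Defensive.
Import Order.TTheory GRing.Theory Num.Theory.
Local Open Scope classical_set_scope.
Local Open Scope ring_scope.

Definition simple_graph (n : nat) (e : rel 'I_n) : Prop :=
  irreflexive e /\ symmetric e.

Definition connected_graph (n : nat) (e : rel 'I_n) : Prop :=
  forall x y : 'I_n, connect e x y.

Definition acyclic_graph (n : nat) (e : rel 'I_n) : Prop :=
  forall c : seq 'I_n, uniq c -> (3 <= size c)%N -> ~~ path.cycle e c.

Definition is_tree (n : nat) (e : rel 'I_n) : Prop :=
  [/\ simple_graph e, connected_graph e & acyclic_graph e].

Definition walk_len (n : nat) (e : rel 'I_n) (x y : 'I_n) (k : nat) : bool :=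
  [exists p : k.-tuple 'I_n, path e x p && (last x p == y)].

(* graph distance = least length of a walk from x to y (for a connected
   graph this is < n, so the search over 0..n-1 finds it) *)
Definition gdist (n : nat) (e : rel 'I_n) (x y : 'I_n) : nat :=
  find (walk_len e x y) (iota 0 n).

Definition dist_mx (R : realType) (n : nat) (e : rel 'I_n) : 'M[R]_n :=
  \matrix_(i, j) (gdist e i j)%:R.

Definition transmission (n : nat) (e : rel 'I_n) (i : 'I_n) : nat :=
  (\sum_(j < n) gdist e i j)%N.

Definition Dmax (n : nat) (e : rel 'I_n) : nat :=
  (\max_(i < n) transmission e i)%N.

Definition distQ_mx (R : realType) (n : nat) (e : rel 'I_n) : 'M[R]_n :=
  dist_mx R e + diag_mx (\row_i (transmission e i)%:R).

Definition largest_eig (R : realType) (n : nat) (A : 'M[R]_n) : R :=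
  sup [set a : R | eigenvalue A a].

Definition star_rel (n : nat) : rel 'I_n :=
  fun x y => (x != y) && ((val x == 0%N) || (val y == 0%N)).

Definition graph_iso (n : nat) (e f : rel 'I_n) : Prop :=
  exists s : {perm 'I_n}, forall x y, e x y = f (s x) (s y).

(* Main.v *)
Require Import Defs.
From HB Require Import structures.
From mathcomp Require Import all_boot all_order all_algebra perm.
From mathcomp Require Import boolp classical_sets reals.
From mathcomp Require Import zify ring lra.
Import Order.TTheory GRing.Theory Num.Theory.
Unset Printing Implicit Defensive.

Lemma walkP {n : nat} {e : rel 'I_n} x y k :
  reflect (exists p : seq 'I_n, [/\ size p = k, path e x p & last x p = y])
          (walk_len e x y k).
Proof.
apply: (iffP existsP) => [[p /andP[hp /eqP hl]]|[p [hs hp hl]]].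
  by exists (tval p); rewrite size_tuple.
have hs' : size p == k by rewrite hs.
by exists (Tuple hs'); rewrite /= hp hl eqxx.
Qed.

Lemma walk0 {n : nat} {e : rel 'I_n} x y : walk_len e x y 0 = (x == y).
Proof.
apply/walkP/eqP => [[p [/size0nil -> _ <-]]//|<-]; by exists [::].
Qed.

Lemma walkS {n : nat} {e : rel 'I_n} x y k :
  walk_len e x y k.+1 -> exists2 z, e x z & walk_len e z y k.
Proof.
case/walkP => [[|z p] [hs hp hl]] //.
case: hs => hs; case/andP: hp => hxz hp.
by exists z => //; apply/walkP; exists p.
Qed.

Lemma walkSE {n : nat} {e : rel 'I_n} x y z k :
  e x z -> walk_len e z y k -> walk_len e x y k.+1.
Proof.
move=> hxz /walkP [p [hs hp hl]]; apply/walkP; exists (z :: p).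
by rewrite /= hs hxz hp.
Qed.

Lemma conn_walk {n : nat} {e : rel 'I_n} x y :
  connected_graph e -> exists2 k, (k < n)%N & walk_len e x y k.
Proof.
move=> hc; case/connectP: (hc x y) => p hp ->.
case/shortenP: hp => p' hp' hu _.
exists (size p'); last by apply/walkP; exists p'.
by have := card_uniqP hu; rewrite /= => hsz; move: (max_card (mem (x :: p'))); rewrite card_ord hsz.
Qed.

Lemma gdist_walk {n : nat} {e : rel 'I_n} x y :
  connected_graph e -> walk_len e x y (gdist e x y).
Proof.
move=> hc; case: (conn_walk x y hc) => k hk hw.
have hh : has (walk_len e x y) (iota 0 n).
  by apply/hasP; exists k => //; rewrite mem_iota.
have := nth_find 0%N hh; rewrite has_find size_iota in hh.
by rewrite nth_iota.
Qed.

Lemma gdist_lt {n : nat} {e : rel 'I_n} x y :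
  connected_graph e -> (gdist e x y < n)%N.
Proof.
move=> hc; case: (conn_walk x y hc) => k hk hw.
have hh : has (walk_len e x y) (iota 0 n).
  by apply/hasP; exists k => //; rewrite mem_iota.
by rewrite has_find size_iota in hh.
Qed.

Lemma gdist_min {n : nat} {e : rel 'I_n} x y k :
  connected_graph e -> walk_len e x y k -> (gdist e x y <= k)%N.
Proof.
move=> hc hw; case: (ltnP k n) => hk; last first.
  by have := gdist_lt x y hc; lia.
rewrite leqNgt; apply/negP => hlt.
by have := before_find 0%N hlt; rewrite nth_iota // add0n hw.
Qed.

Lemma gdist0 {n : nat} {e : rel 'I_n} x y :
  connected_graph e -> (gdist e x y == 0%N) = (x == y).
Proof.
move=> hc; apply/eqP/eqP => [h|<-].
  by have := gdist_walk x y hc; rewrite h walk0 => /eqP.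
by apply/eqP; rewrite -leqn0; apply: (gdist_min _ _ _ hc); rewrite walk0.
Qed.

Lemma gdist_xx {n : nat} {e : rel 'I_n} x :
  connected_graph e -> gdist e x x = 0%N.
Proof. by move=> hc; apply/eqP; rewrite gdist0. Qed.

Lemma gdist_step {n : nat} {e : rel 'I_n} x y z :
  connected_graph e -> e x z -> (gdist e x y <= (gdist e z y).+1)%N.
Proof.
by move=> hc hxz; apply: (gdist_min _ _ _ hc); apply: walkSE hxz (gdist_walk _ _ hc).
Qed.

Lemma gdist_succ {n : nat} {e : rel 'I_n} x y k :
  connected_graph e -> gdist e x y = k.+1 ->
  exists2 z, e x z & gdist e z y = k.
Proof.
move=> hc hk; have := gdist_walk x y hc; rewrite hk => /walkS [z hxz hw].
exists z => //; apply/eqP; rewrite eqn_leq (gdist_min _ _ _ hc) //=.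
by rewrite -ltnS -hk gdist_step.
Qed.

Lemma gdist1 {n : nat} {e : rel 'I_n} x y :
  connected_graph e -> irreflexive e -> (gdist e x y == 1%N) = e x y.
Proof.
move=> hc hirr; apply/eqP/idP => [h|hxy].
  case: (gdist_succ _ _ _ hc h) => z hxz /eqP; rewrite gdist0 // => /eqP <- //.
apply/eqP; rewrite eqn_leq (gdist_min _ _ _ hc) //=; last by apply: walkSE hxy _; rewrite walk0.
rewrite lt0n gdist0 //; apply/eqP => hh; by rewrite hh hirr in hxy.
Qed.

Lemma gdist_tri {n : nat} {e : rel 'I_n} x y z :
  connected_graph e -> (gdist e x y <= gdist e x z + gdist e z y)%N.
Proof.
move=> hc; move hk: (gdist e x z) => k; elim: k x hk => [|k IH] x hk.
  by move/eqP: hk; rewrite gdist0 // => /eqP ->.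
case: (gdist_succ _ _ _ hc hk) => x' hxx' hk'.
apply: leq_trans (gdist_step _ y _ hc hxx') _; rewrite addSn ltnS; exact: IH.
Qed.

Lemma gdist_sym {n : nat} {e : rel 'I_n} x y :
  connected_graph e -> irreflexive e -> symmetric e -> gdist e x y = gdist e y x.
Proof.
move=> hc hirr hs.
suff H : forall a b, (gdist e a b <= gdist e b a)%N.
  by apply/eqP; rewrite eqn_leq !H.
move=> a b; move hk: (gdist e b a) => k; elim: k a b hk => [|k IH] a b hk.
  by move/eqP: hk; rewrite gdist0 // => /eqP ->; rewrite gdist_xx.
case: (gdist_succ _ _ _ hc hk) => b' hbb' hk'.
apply: leq_trans (gdist_tri a b b' hc) _.
have h1 : gdist e b' b = 1%N.
  by apply/eqP; rewrite gdist1 // hs.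
by rewrite h1 addn1 ltnS; exact: IH.
Qed.

Lemma nocycle_dist {n : nat} {e : rel 'I_n} x k :
  is_tree e -> forall a (c : seq 'I_n), uniq (a :: c) -> c != [::] -> path e a c ->
  gdist e a x = k -> gdist e (last a c) x = k ->
  (forall z, z \in a :: c -> (k <= gdist e z x)%N) -> False.
Proof.
case=> [[hirr hsym] hc hac]; elim: k => [|k IH] a c hu hne hp ha hb hall.
  move/eqP: ha; rewrite gdist0 // => /eqP ha.
  move/eqP: hb; rewrite gdist0 // => /eqP hb.
  case: c hne hu hp hb hall => [//|y c] _ hu _ hb _.
  move: hb => /= hb; have := mem_last y c; rewrite hb -ha => hm.
  by move: hu; rewrite /= hm.
case: (gdist_succ _ _ _ hc ha) => a' haa' ha'.
case: (gdist_succ _ _ _ hc hb) => b' hbb' hb'.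
have na' : a' \notin a :: c.
  by apply/negP => /hall; rewrite ha' ltnn.
have nb' : b' \notin a :: c.
  by apply/negP => /hall; rewrite hb' ltnn.
case: (eqVneq a' b') => [eab|neab].
  apply: (negP (hac (a' :: a :: c) _ _)).
  - by rewrite /= na'.
  - by move: hne; case: (c).
  rewrite /= -cats1 /= hsym haa' cat_path hp /= eab hbb' //.
apply: (IH a' (rcons (a :: c) b')).
- have := na'; have := nb'; rewrite !in_cons !negb_or => /andP[nb1 nb2] /andP[na1 na2].
  move: hu => /andP[hu1 hu2]; rewrite eq_sym in nb1.
  rewrite /= -rcons_cons !mem_rcons rcons_uniq !in_cons.
  by rewrite (negbTE neab) (negbTE na1) (negbTE nb1) /= na2 hu1 nb2; exact: hu2.
- by rewrite -cats1; case: (a :: c).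
- by rewrite /= -cats1 cat_path hsym haa' hp /= hbb'.
- exact: ha'.
- by rewrite last_rcons.
- move=> z; rewrite in_cons mem_rcons in_cons => /or3P [/eqP->|/eqP->|hz].
  + by rewrite ha'.
  + by rewrite hb'.
  + by apply: ltnW; apply: hall.
Qed.

Lemma edge_dist {n : nat} {e : rel 'I_n} j y x :
  is_tree e -> e j y ->
  gdist e y x = (gdist e j x).+1 \/ gdist e j x = (gdist e y x).+1.
Proof.
move=> ht hjy; have [[hirr hsym] hc hac] := ht.
have h1 := gdist_step j x y hc hjy.
have h2 := gdist_step y x j hc (etrans (hsym _ _) hjy).
case: (eqVneq (gdist e j x) (gdist e y x)) => heq; last by lia.
exfalso; apply: (nocycle_dist x (gdist e j x) ht j [:: y]) => //.
- by rewrite /= inE andbT; apply/eqP => hh; rewrite hh hirr in hjy.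
- by rewrite /= hjy.
- by move=> z; rewrite !inE => /orP[] /eqP ->; rewrite ?heq.
Qed.

Lemma two_closer {n : nat} {e : rel 'I_n} j y1 y2 x :
  is_tree e -> e j y1 -> e j y2 -> y1 != y2 ->
  (gdist e y1 x < gdist e j x)%N -> (gdist e y2 x < gdist e j x)%N -> False.
Proof.
move=> ht h1 h2 hne l1 l2; have [[hirr hsym] hc hac] := ht.
have E1 := edge_dist j y1 x ht h1; have E2 := edge_dist j y2 x ht h2.
have eq12 : gdist e y1 x = gdist e y2 x by lia.
apply: (nocycle_dist x (gdist e y1 x) ht y1 [:: j; y2]) => //.
- rewrite /= !inE negb_or hne andbT andbT.
  apply/andP; split; apply/eqP => hh.
    by rewrite hh hirr in h1.
  by rewrite hh hirr in h2.
- by rewrite /= hsym h1 h2.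
- move=> z; rewrite !inE => /or3P [] /eqP ->; lia.
Qed.

Definition trans' {n : nat} (e : rel 'I_n) i := transmission e i.

Definition br {n : nat} (e : rel 'I_n) j y := [set x | (gdist e y x < gdist e j x)%N].

Lemma trans_branch {n : nat} {e : rel 'I_n} j y :
  is_tree e -> e j y ->
  (transmission e y + 2 * #|br e j y| = transmission e j + n)%N.
Proof.
move=> ht hjy.
have H : (\sum_(x < n) (gdist e y x + (if x \in br e j y then 2 else 0)) =
         \sum_(x < n) (gdist e j x + 1))%N.
  apply: eq_bigr => x _; rewrite inE.
  case: (edge_dist j y x ht hjy) => ->; rewrite ?ltnn ?ltnS ?leqnn ?ltnNge ?leqnSn //=; lia.
rewrite !big_split /= -big_mkcond sum_nat_const sum1_card card_ord in H.
by rewrite /transmission -H mulnC.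
Qed.

Definition internal {n : nat} (e : rel 'I_n) x := (1 < #|[set y | e x y]|)%N.

Lemma exists_other {n : nat} (x : 'I_n) : (2 <= n)%N -> exists y : 'I_n, y != x.
Proof.
move=> hn; case: (eqVneq (val x) 0%N) => hx.
  exists (Ordinal hn); apply/eqP => /(congr1 val) /=; rewrite hx.
  done.
have h0 : (0 < n)%N by lia.
exists (Ordinal h0); apply/eqP => /(congr1 val) /=; move: hx; rewrite eq_sym => /eqP; done.
Qed.

Lemma leaf_nb {n : nat} {e : rel 'I_n} x :
  is_tree e -> (2 <= n)%N -> ~~ internal e x ->
  exists2 p, e x p & forall z, e x z -> z = p.
Proof.
move=> ht hn hni; have [[hirr hsym] hc hac] := ht.
case: (exists_other x hn) => y hyx.
have : gdist e x y != 0%N by rewrite gdist0 // eq_sym.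
case hk: (gdist e x y) => [//|k] _.
case: (gdist_succ _ _ _ hc hk) => p hxp _.
exists p => // z hxz; apply/eqP; apply: contraNT hni => hzp.
apply/card_gt1P; exists z, p; by rewrite !inE hxz hxp.
Qed.

Lemma leaf_dist {n : nat} {e : rel 'I_n} x p y :
  is_tree e -> e x p -> (forall z, e x z -> z = p) -> y != x ->
  gdist e x y = (gdist e p y).+1.
Proof.
move=> ht hxp hu hyx; have [[hirr hsym] hc hac] := ht.
have : gdist e x y != 0%N by rewrite gdist0 // eq_sym.
case hk: (gdist e x y) => [//|k] _.
case: (gdist_succ _ _ _ hc hk) => z hxz <-.
by rewrite (hu z hxz).
Qed.

Lemma leaf_trans {n : nat} {e : rel 'I_n} x p :
  is_tree e -> e x p -> (forall z, e x z -> z = p) ->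
  (transmission e x + 2 = transmission e p + n)%N.
Proof.
move=> ht hxp hu; have [[hirr hsym] hc hac] := ht.
have hpx : e p x by rewrite hsym.
have := trans_branch p x ht hpx.
suff -> : #|br e p x| = 1%N by rewrite muln1.
suff -> : br e p x = [set x] by rewrite cards1.
apply/setP => z; rewrite !inE.
case: (eqVneq z x) => [->|hzx].
  by rewrite gdist_xx // lt0n gdist0 // eq_sym; apply/negP => /eqP hh; rewrite hh hirr in hxp.
by rewrite (leaf_dist x p z ht hxp hu hzx) ltnNge leqnSn.
Qed.

Lemma internal_step {n : nat} {e : rel 'I_n} j :
  is_tree e -> (2 <= n)%N -> internal e j ->
  exists2 y, (transmission e j < transmission e y)%N &
    internal e y \/ (transmission e y + 2 = transmission e j + n)%N.
Proof.
move=> ht hn /card_gt1P [y1 [y2 []]]; rewrite !inE => h1 h2 hne.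
have [[hirr hsym] hc hac] := ht.
have hdis : br e j y1 :&: br e j y2 = finset.set0.
  apply/setP => x; rewrite !inE; apply/negP => /andP [l1 l2].
  exact: (two_closer j y1 y2 x ht h1 h2 hne l1 l2).
have hsub : br e j y1 :|: br e j y2 \subset [set~ j].
  apply/fintype.subsetP => x; rewrite !inE => hx; apply/eqP => hxj; move: hx.
  by rewrite hxj gdist_xx // !ltn0.
have := subset_leq_card hsub; rewrite cardsC1 card_ord cardsU hdis cards0 subn0 => hcard.
suff [y hjy hB] : exists2 y, e j y & (2 * #|br e j y| <= n.-1)%N.
  have hT := trans_branch j y ht hjy.
  exists y; first by lia.
  case hiy: (internal e y); first by left.
  right; case: (leaf_nb y ht hn (negbT hiy)) => p hyp hu.
  have hyj : e y j by rewrite hsym.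
  rewrite -(hu j hyj) in hyp.
  by have := leaf_trans y j ht hyj (fun z hz => etrans (hu z hz) (esym (hu j hyj))).
case: (leqP (2 * #|br e j y1|) n.-1) => hh; first by exists y1.
by exists y2 => //; lia.
Qed.

Lemma trans_le_max {n : nat} (e : rel 'I_n) i : (transmission e i <= Dmax e)%N.
Proof. rewrite /Dmax; exact: (@leq_bigmax _ (transmission e) i). Qed.

Lemma internal_trans {n : nat} {e : rel 'I_n} j :
  is_tree e -> (2 <= n)%N -> internal e j ->
  (transmission e j + n <= Dmax e + 2)%N.
Proof.
move=> ht hn.
suff H : forall m j, (Dmax e - transmission e j <= m)%N -> internal e j ->
  (transmission e j + n <= Dmax e + 2)%N by apply: H.
elim=> [|m IH] {}j hm hj; case: (internal_step j ht hn hj) => y hlt [hy|hy];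
  have := trans_le_max e y; have := trans_le_max e j; try lia.
move=> _ _; have := IH y ltac:(lia) hy; lia.
Qed.

Lemma nonstar_nonnb {n : nat} {e : rel 'I_n} q :
  is_tree e -> (2 <= n)%N -> ~ graph_iso e (@star_rel n) ->
  exists2 z, z != q & ~~ e q z.
Proof.
move=> ht hn hni; have [[hirr hsym] hc hac] := ht.
case: (boolP [exists z, (z != q) && ~~ e q z]) => [/existsP [z /andP [h1 h2]]|hall].
  by exists z.
exfalso; apply: hni.
have h0 : (0 < n)%N by lia.
pose z0 : 'I_n := Ordinal h0.
exists (tperm q z0) => x y.
have hv : forall a, (val (tperm q z0 a) == 0%N) = (a == q).
  move=> a; have -> : (val (tperm q z0 a) == 0%N) = (tperm q z0 a == z0) by [].
  by rewrite -[X in _ == X](tpermL q z0) (inj_eq (@perm_inj _ _)).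
rewrite /star_rel (inj_eq (@perm_inj _ _)) !hv.
have hq : forall a, a != q -> e q a.
  move=> a ha; apply/negPn; apply: contra hall => hn'.
  by apply/existsP; exists a; rewrite ha hn'.
case: (eqVneq x q) => [->|hxq] /=.
  case: (eqVneq q y) => [<-|hqy]; first by rewrite hirr.
  by rewrite hq // eq_sym.
case: (eqVneq y q) => [->|hyq] /=.
  by rewrite andbT hsym hq.
rewrite andbF; apply/negP => hxy.
have hxy' : x != y by apply/eqP => hh; rewrite hh hirr in hxy.
apply: (negP (hac [:: q; x; y] _ _)) => //.
  by rewrite /= !inE !negb_or eq_sym hxq eq_sym hyq hxy'.
by rewrite /= hq // hxy hsym hq.
Qed.

Lemma nonstar_int_nb {n : nat} {e : rel 'I_n} q :
  is_tree e -> (2 <= n)%N -> ~ graph_iso e (@star_rel n) ->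
  exists2 r, e q r & internal e r.
Proof.
move=> ht hn hni; have [[hirr hsym] hc hac] := ht.
case: (nonstar_nonnb q ht hn hni) => z hzq hqz.
have : gdist e q z != 0%N by rewrite gdist0 // eq_sym.
case hk: (gdist e q z) => [//|k] _.
case: (gdist_succ _ _ _ hc hk) => r hqr hrz.
exists r => //.
have : gdist e r z != 0%N.
  rewrite gdist0 //; apply/eqP => hrz'; by rewrite hrz' (negbTE hqz) in hqr.
case hk': (gdist e r z) => [//|k'] _.
case: (gdist_succ _ _ _ hc hk') => r' hrr' hr'z.
apply/card_gt1P; exists q, r'; rewrite !inE hsym hqr hrr'; split => //.
by apply/eqP => hh; move: hk; rewrite hh hr'z; lia.
Qed.

Definition cmap {n : nat} (e : rel 'I_n) x :=
  if internal e x then x else odflt x [pick p | e x p].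

Lemma cmap_leaf {n : nat} {e : rel 'I_n} x :
  is_tree e -> (2 <= n)%N -> ~~ internal e x ->
  e x (cmap e x) /\ forall z, e x z -> z = cmap e x.
Proof.
move=> ht hn hx; case: (leaf_nb x ht hn hx) => p hxp hu.
rewrite /cmap (negbTE hx); case: pickP => [p' hp'|h]; last by rewrite h in hxp.
by rewrite /= (hu p' hp'); split.
Qed.

Lemma cmap_internal {n : nat} {e : rel 'I_n} x :
  is_tree e -> (2 <= n)%N -> ~ graph_iso e (@star_rel n) -> internal e (cmap e x).
Proof.
move=> ht hn hni; case hx: (internal e x); first by rewrite /cmap hx.
have [[hirr hsym] hc hac] := ht.
case: (cmap_leaf x ht hn (negbT hx)) => hxp hu.
case: (nonstar_int_nb (cmap e x) ht hn hni) => r hpr hr.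
case hp: (internal e (cmap e x)) => //.
case: (cmap_leaf (cmap e x) ht hn (negbT hp)) => _ hu'.
have hpx : e (cmap e x) x by rewrite hsym.
by rewrite (hu' r hpr) -(hu' x hpx) hx in hr.
Qed.

Lemma fiber_card {n : nat} {e : rel 'I_n} q :
  is_tree e -> (2 <= n)%N -> ~ graph_iso e (@star_rel n) -> internal e q ->
  (#|[set x | cmap e x == q]| <= n - 2)%N.
Proof.
move=> ht hn hni hq; have [[hirr hsym] hc hac] := ht.
case: (nonstar_nonnb q ht hn hni) => z hzq hqz.
case: (nonstar_int_nb q ht hn hni) => r hqr hr.
have hzr : z != r by apply/eqP => hh; rewrite hh hqr in hqz.
have hsub : [set x | cmap e x == q] \subset ~: [set z; r].
  apply/fintype.subsetP => x; rewrite !inE => /eqP hx.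
  rewrite negb_or; apply/andP; split; apply/eqP => hh; subst x.
    case hiz: (internal e z).
      by move: hx; rewrite /cmap hiz => hh; rewrite hh eqxx in hzq.
    case: (cmap_leaf z ht hn (negbT hiz)) => hzp _.
    by rewrite hx hsym in hzp; rewrite hzp in hqz.
  move: hx; rewrite /cmap hr => hh; by rewrite hh hirr in hqr.
have := subset_leq_card hsub; have := cardsC [set z; r]; rewrite cards2 hzr card_ord; lia.
Qed.

Lemma sum_ind {n : nat} (A : {set 'I_n}) :
  (\sum_(x < n) (if x \in A then 1 else 0) = #|A|)%N.
Proof. by rewrite -big_mkcond /= sum1_card. Qed.

Lemma nonstar_two_int {n : nat} {e : rel 'I_n} :
  is_tree e -> (2 <= n)%N -> ~ graph_iso e (@star_rel n) ->
  exists r1 r2, [/\ internal e r1, internal e r2 & r1 != r2].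
Proof.
move=> ht hn hni; have [[hirr hsym] hc hac] := ht.
have h0 : (0 < n)%N by lia.
case: (nonstar_int_nb (Ordinal h0) ht hn hni) => r _ hr.
case: (nonstar_int_nb r ht hn hni) => r2 hrr2 hr2.
exists r, r2; split => //; apply/eqP => hh; by rewrite hh hirr in hrr2.
Qed.

Lemma nonstar_n3 {n : nat} {e : rel 'I_n} :
  is_tree e -> (2 <= n)%N -> ~ graph_iso e (@star_rel n) -> (3 <= n)%N.
Proof.
move=> ht hn hni; case: (nonstar_two_int ht hn hni) => r1 [r2 [h1 _ _]].
have := fiber_card r1 ht hn hni h1.
have : r1 \in [set x | cmap e x == r1] by rewrite inE /cmap h1.
move=> hin; have : (0 < #|[set x | cmap e x == r1]|)%N by apply/card_gt0P; exists r1.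
lia.
Qed.

Lemma leaves_card {n : nat} {e : rel 'I_n} :
  is_tree e -> (2 <= n)%N -> ~ graph_iso e (@star_rel n) ->
  (\sum_(x < n) (if internal e x then 0 else 1) <= n - 2)%N.
Proof.
move=> ht hn hni; case: (nonstar_two_int ht hn hni) => r1 [r2 [h1 h2 h12]].
apply: (@leq_trans (\sum_(x < n) (if x \in ~: [set r1; r2] then 1 else 0))).
  apply: leq_sum => x _; rewrite !inE.
  case: (eqVneq x r1) => [->|hx1]; first by rewrite h1.
  case: (eqVneq x r2) => [->|hx2]; first by rewrite h2.
  by case: (internal e x).
have h2c : #|[set r1; r2]| = 2 by rewrite cards2 h12.
rewrite sum_ind; have := cardsC [set r1; r2]; rewrite h2c card_ord => hh.
by rewrite leq_subRL // hh.
Qed.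

Lemma trans_cmap {n : nat} {e : rel 'I_n} i :
  is_tree e -> (2 <= n)%N ->
  (transmission e i + (if internal e i then 0 else 2) <=
   \sum_(x < n) gdist e i (cmap e x) + \sum_(x < n) (if internal e x then 0 else 1))%N.
Proof.
move=> ht hn; have [[hirr hsym] hc hac] := ht.
have -> : (if internal e i then 0 else 2)%N =
    \sum_(x < n) (if (x == i) && ~~ internal e x then 2 else 0)%N.
  rewrite (bigD1 i) //= eqxx big1 ?addn0 => [|x /negbTE -> //].
  by case: (internal e i).
rewrite /transmission -!big_split /=; apply: leq_sum => x _.
case hx: (internal e x); first by rewrite /cmap hx andbF.
case: (cmap_leaf x ht hn (negbT hx)) => hxp hu.
case: (eqVneq x i) => [<-|hxi] /=.
  by rewrite gdist_xx //; have /eqP -> : gdist e x (cmap e x) == 1%N by rewrite gdist1.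
rewrite (gdist_sym i x hc hirr hsym) (leaf_dist x (cmap e x) i ht hxp hu) ?(eq_sym i) //.
by rewrite (gdist_sym _ _ hc hirr hsym) addn0 addn1.
Qed.

Definition Ssum {n : nat} (e : rel 'I_n) i := (\sum_(q | internal e q) gdist e i q)%N.

Lemma cmap_sum {n : nat} {e : rel 'I_n} i :
  is_tree e -> (2 <= n)%N -> ~ graph_iso e (@star_rel n) ->
  (\sum_(x < n) gdist e i (cmap e x) <= (n - 2) * Ssum e i)%N.
Proof.
move=> ht hn hni.
rewrite (partition_big (cmap e) (internal e)) /=; last by move=> x _; exact: cmap_internal.
rewrite /Ssum big_distrr /=; apply: leq_sum => q hq.
rewrite (eq_bigr (fun _ => gdist e i q)); last by move=> x /eqP ->.
rewrite sum_nat_const leq_mul2r; apply/orP; right.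
have := fiber_card q ht hn hni hq; apply: leq_trans.
by apply: subset_leq_card; apply/fintype.subsetP => x; rewrite !inE.
Qed.

Lemma gsum_ge {n : nat} {e : rel 'I_n} i :
  is_tree e -> (2 <= n)%N ->
  ((n - 2) * Ssum e i <= \sum_(j < n) gdist e i j * (Dmax e - transmission e j))%N.
Proof.
move=> ht hn; rewrite /Ssum big_distrr /= big_mkcond /=.
apply: leq_sum => j _; case hj: (internal e j) => //.
have := internal_trans j ht hn hj; move=> h; rewrite mulnC leq_mul2l.
by apply/orP; right; lia.
Qed.

Lemma Ssum_ge1 {n : nat} {e : rel 'I_n} i :
  is_tree e -> (2 <= n)%N -> ~ graph_iso e (@star_rel n) -> (1 <= Ssum e i)%N.
Proof.
move=> ht hn hni; have [[hirr hsym] hc hac] := ht.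
case: (nonstar_two_int ht hn hni) => r1 [r2 [h1 h2 h12]].
have [r [hr hri]] : exists r, internal e r /\ r != i.
  case: (eqVneq r1 i) => [e1|]; last by exists r1.
  by exists r2; split => //; rewrite -e1 eq_sym.
rewrite /Ssum (bigD1 r) //=; have : gdist e i r != 0%N by rewrite gdist0 // eq_sym.
lia.
Qed.

Lemma Ssum_ge3 {n : nat} {e : rel 'I_n} i :
  is_tree e -> (2 <= n)%N -> ~ graph_iso e (@star_rel n) -> ~~ internal e i ->
  (3 <= Ssum e i)%N.
Proof.
move=> ht hn hni hi; have [[hirr hsym] hc hac] := ht.
case: (cmap_leaf i ht hn hi) => hip hu.
have hp := cmap_internal i ht hn hni.
case: (nonstar_two_int ht hn hni) => r1 [r2 [h1 h2 h12]].
have [r [hr hri]] : exists r, internal e r /\ r != cmap e i.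
  case: (eqVneq r1 (cmap e i)) => [e1|]; last by exists r1.
  by exists r2; split => //; rewrite -e1 eq_sym.
rewrite /Ssum (bigD1 (cmap e i)) //= (bigD1 r) /=; last by rewrite hr hri.
have -> : gdist e i (cmap e i) = 1%N by apply/eqP; rewrite gdist1.
have : gdist e i r != 0%N.
  rewrite gdist0 //; apply/eqP => hh; by rewrite hh hr in hi.
have : gdist e i r != 1%N.
  rewrite gdist1 //; apply/negP => hh; by rewrite (hu r hh) eqxx in hri.
lia.
Qed.

Theorem keyA {n : nat} {e : rel 'I_n} i :
  is_tree e -> (2 <= n)%N -> ~ graph_iso e (@star_rel n) ->
  (transmission e i <= 2 * \sum_(j < n) gdist e i j * (Dmax e - transmission e j))%N.
Proof.
move=> ht hn hni.
have h1 := trans_cmap i ht hn; have h2 := cmap_sum i ht hn hni.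
have h3 := leaves_card ht hn hni; have h4 := gsum_ge i ht hn.
have h5 := Ssum_ge1 i ht hn hni.
move: h1 h2 h3 h4 h5.
set T := transmission e i; set S := Ssum e i; set G := \sum_(j < n) (gdist e i j * _)%N.
set C := \sum_(x < n) gdist e i (cmap e x); set L := \sum_(x < n) _.
move=> h1 h2 h3 h4 h5.
have : (n - 2 <= (n - 2) * S)%N by rewrite leq_pmulr.
set P := ((n - 2) * S)%N.
case: (internal e i) h1 => /= h1; lia.
Qed.

Theorem keyB {n : nat} {e : rel 'I_n} i :
  is_tree e -> (2 <= n)%N -> ~ graph_iso e (@star_rel n) ->
  transmission e i = Dmax e ->
  (3 * transmission e i <= 4 * \sum_(j < n) gdist e i j * (Dmax e - transmission e j))%N.
Proof.
move=> ht hn hni hmax.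
have n3 := nonstar_n3 ht hn hni.
have hi : ~~ internal e i.
  apply/negP => hi; have := internal_trans i ht hn hi; lia.
have h1 := trans_cmap i ht hn; have h2 := cmap_sum i ht hn hni.
have h3 := leaves_card ht hn hni; have h4 := gsum_ge i ht hn.
have h5 := Ssum_ge3 i ht hn hni hi.
move: h1 h2 h3 h4 h5; rewrite (negbTE hi) /=.
set T := transmission e i; set S := Ssum e i; set G := \sum_(j < n) (gdist e i j * _)%N.
set C := \sum_(x < n) gdist e i (cmap e x); set L := \sum_(x < n) _.
move=> h1 h2 h3 h4 h5.
have : (3 * (n - 2) <= (n - 2) * S)%N by rewrite mulnC leq_mul2l h5 orbT.
set P := ((n - 2) * S)%N.
lia.
Qed.

Lemma iso_center {n : nat} {e : rel 'I_n} :
  graph_iso e (@star_rel n) -> (0 < n)%N ->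
  exists c, forall x y, e x y = (x != y) && ((x == c) || (y == c)).
Proof.
case=> s hs h0; pose z0 : 'I_n := Ordinal h0.
exists ((s^-1)%g z0) => x y; rewrite hs /star_rel (inj_eq (@perm_inj _ _)).
have hv : forall a, (val (s a) == 0%N) = (a == (s^-1)%g z0).
  move=> a; have -> : (val (s a) == 0%N) = (s a == z0) by [].
  by rewrite -[X in _ == X](permKV s z0) (inj_eq (@perm_inj _ _)).
by rewrite !hv.
Qed.

Definition dstar {n : nat} (c x y : 'I_n) : nat :=
  if x == y then 0 else if (x == c) || (y == c) then 1 else 2.

Lemma gdist_star {n : nat} {e : rel 'I_n} c :
  is_tree e -> (forall x y, e x y = (x != y) && ((x == c) || (y == c))) ->
  forall x y, gdist e x y = dstar c x y.
Proof.
move=> ht he x y; have [[hirr hsym] hc hac] := ht.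
rewrite /dstar; case: (eqVneq x y) => [->|hxy]; first by rewrite gdist_xx.
case: ifP => hcx.
  by apply/eqP; rewrite gdist1 // he hxy hcx.
have hxc : x != c by apply: contraFneq hcx => ->; rewrite eqxx.
have hyc : y != c by apply: contraFneq hcx => ->; rewrite eqxx orbT.
have h2 : (gdist e x y <= 2)%N.
  apply: (gdist_min _ _ _ hc); apply: (walkSE _ _ c).
    by rewrite he hxc eqxx orbT.
  apply: (walkSE _ _ y); first by rewrite he eq_sym hyc eqxx.
  by rewrite walk0.
have h0 : gdist e x y != 0%N by rewrite gdist0.
have h1 : gdist e x y != 1%N by rewrite gdist1 // he hxy hcx.
lia.
Qed.

Lemma sum_star2 {n : nat} (c : 'I_n) (f : 'I_n -> nat) K :
  (forall i, i != c -> f i = K) -> (\sum_(i < n) f i = f c + (n - 1) * K)%N.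
Proof.
move=> hf; rewrite (bigD1 c) //=; congr (_ + _)%N.
rewrite (eq_bigr (fun _ => K)) // sum_nat_const; congr (_ * _)%N.
have := cardC1 c; rewrite card_ord => hh; rewrite hh subn1 /=.
by [].
Qed.

Lemma card_two_off {n : nat} (j c : 'I_n) : j != c ->
  #|[pred i | (i != j) && (i != c)]| = (n - 2)%N.
Proof.
move=> hjc; have := cardC1 j; rewrite card_ord => h1.
have := cardD1 c (predC1 j); rewrite h1 !inE eq_sym hjc /= => h2.
have -> : #|[pred i | (i != j) && (i != c)]| = #|[predD1 predC1 j & c]|.
  by apply: eq_card => i; rewrite !inE andbC.
have hn : (2 <= n)%N by move: h2; lia.
apply/eqP; rewrite -(eqn_add2l 1) -h2; apply/eqP; lia.
Qed.

Lemma sum_star3 {n : nat} (c j : 'I_n) (f : 'I_n -> nat) K : j != c ->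
  (forall i, i != j -> i != c -> f i = K) ->
  (\sum_(i < n) f i = f j + f c + (n - 2) * K)%N.
Proof.
move=> hjc hf; rewrite (bigD1 j) //= (bigD1 c) /=; last by rewrite eq_sym.
rewrite addnA; congr (_ + _)%N.
rewrite (eq_bigr (fun _ => K)); last by move=> i /andP[]; exact: hf.
by rewrite sum_nat_const card_two_off // mulnC.
Qed.

Lemma sumr_star2 (R : realType) {n : nat} (c : 'I_n) (f : 'I_n -> R) K :
  (forall i, i != c -> f i = K) -> (\sum_(i < n) f i = f c + K *+ (n - 1))%R.
Proof.
move=> hf; rewrite (bigD1 c) //=; congr (_ + _)%R.
rewrite (eq_bigr (fun _ => K)) // sumr_const; congr (_ *+ _)%R.
have := cardC1 c; rewrite card_ord => hh; rewrite subn1 -hh.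
by apply: eq_card => i; rewrite !inE.
Qed.

Lemma sumr_star3 (R : realType) {n : nat} (c j : 'I_n) (f : 'I_n -> R) K : j != c ->
  (forall i, i != j -> i != c -> f i = K) ->
  (\sum_(i < n) f i = f j + f c + K *+ (n - 2))%R.
Proof.
move=> hjc hf; rewrite (bigD1 j) //= (bigD1 c) /=; last by rewrite eq_sym.
rewrite addrA; congr (_ + _)%R.
rewrite (eq_bigr (fun _ => K)); last by move=> i /andP[]; exact: hf.
by rewrite sumr_const card_two_off.
Qed.

Lemma trans_star {n : nat} {e : rel 'I_n} c :
  is_tree e -> (forall x y, e x y = (x != y) && ((x == c) || (y == c))) ->
  transmission e c = (n - 1)%N /\
  forall x, x != c -> transmission e x = (1 + (n - 2) * 2)%N.
Proof.
move=> ht he; split.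
  rewrite /transmission (sum_star2 c _ 1) => [|i hi].
    by rewrite (gdist_star c ht he) /dstar eqxx muln1.
  by rewrite (gdist_star c ht he) /dstar eq_sym (negbTE hi) eqxx.
move=> x hxc; rewrite /transmission (sum_star3 c x _ 2) // => [|i hix hic].
  by rewrite !(gdist_star c ht he) /dstar eqxx (negbTE hxc) eqxx orbT.
by rewrite (gdist_star c ht he) /dstar eq_sym (negbTE hix) (negbTE hxc) (negbTE hic).
Qed.

Lemma Dmax_star {n : nat} {e : rel 'I_n} c :
  is_tree e -> (2 <= n)%N -> (forall x y, e x y = (x != y) && ((x == c) || (y == c))) ->
  Dmax e = (1 + (n - 2) * 2)%N.
Proof.
move=> ht hn he; have [hc hx] := trans_star c ht he.
apply/eqP; rewrite eqn_leq; apply/andP; split.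
  apply/bigmax_leqP => i _; case: (eqVneq i c) => [->|hic]; last by rewrite hx.
  rewrite hc; lia.
case: (exists_other c hn) => x hxc.
by rewrite -(hx x hxc); exact: (@leq_bigmax _ (transmission e) x).
Qed.

Lemma trans_pos {n : nat} {e : rel 'I_n} i :
  is_tree e -> (2 <= n)%N -> (0 < transmission e i)%N.
Proof.
move=> ht hn; have [[hirr hsym] hc hac] := ht.
case: (exists_other i hn) => y hyi.
rewrite /transmission (bigD1 y) //=.
have : gdist e i y != 0%N by rewrite gdist0 // eq_sym.
lia.
Qed.

Lemma split_id {n : nat} (e : rel 'I_n) j :
  (\sum_(i < n) gdist e j i * transmission e i +
   \sum_(i < n) gdist e j i * (Dmax e - transmission e i) = Dmax e * transmission e j)%N.
Proof.
rewrite -big_split /= [transmission e j]/transmission big_distrr /=; apply: eq_bigr => i _.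
have h := trans_le_max e i.
by rewrite -mulnDr subnKC // mulnC.
Qed.

Lemma colD_nat {n : nat} {e : rel 'I_n} j :
  is_tree e -> (2 <= n)%N -> ~ graph_iso e (@star_rel n) ->
  (2 * \sum_(i < n) transmission e i * gdist e i j + transmission e j <=
   2 * Dmax e * transmission e j)%N.
Proof.
move=> ht hn hni; have [[hirr hsym] hc hac] := ht.
have hA := keyA j ht hn hni; have hI := split_id e j.
rewrite (eq_bigr (fun i => gdist e j i * transmission e i)%N); last first.
  by move=> i _; rewrite mulnC (gdist_sym i j hc hirr hsym).
move: hA hI.
set X := \sum_(i < n) (gdist e j i * transmission e i)%N.
set G := \sum_(i < n) (gdist e j i * _)%N.
set P := (Dmax e * transmission e j)%N.
have -> : (2 * Dmax e * transmission e j = 2 * P)%N by rewrite /P mulnA.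
lia.
Qed.

Lemma colQ_nat {n : nat} {e : rel 'I_n} j :
  is_tree e -> (2 <= n)%N -> ~ graph_iso e (@star_rel n) ->
  (4 * (\sum_(i < n) transmission e i * gdist e i j + transmission e j * transmission e j)
   + 3 * transmission e j <= 8 * Dmax e * transmission e j)%N.
Proof.
move=> ht hn hni; have [[hirr hsym] hc hac] := ht.
have hD := colD_nat j ht hn hni.
have hI := split_id e j.
have hle := trans_le_max e j.
have hsw : (\sum_(i < n) transmission e i * gdist e i j =
            \sum_(i < n) gdist e j i * transmission e i)%N.
  by apply: eq_bigr => i _; rewrite mulnC (gdist_sym i j hc hirr hsym).
rewrite hsw in hD *.
move: hD hI.
set X := \sum_(i < n) (gdist e j i * transmission e i)%N.
set G := \sum_(i < n) (gdist e j i * _)%N.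
have -> : (2 * Dmax e * transmission e j = 2 * (Dmax e * transmission e j))%N by rewrite mulnA.
have -> : (8 * Dmax e * transmission e j = 8 * (Dmax e * transmission e j))%N by rewrite mulnA.
case: (ltnP (transmission e j) (Dmax e)) => hlt.
  have : (transmission e j * transmission e j + transmission e j <= Dmax e * transmission e j)%N.
    by rewrite addnC -mulSn leq_mul2r hlt orbT.
  set P := (Dmax e * transmission e j)%N; set Q := (transmission e j * _)%N.
  lia.
have heq : transmission e j = Dmax e by apply/eqP; rewrite eqn_leq hle hlt.
have hB := keyB j ht hn hni heq.
move: hB; rewrite -/G.
have -> : (transmission e j * transmission e j = Dmax e * transmission e j)%N by rewrite {1}heq.
set P := (Dmax e * transmission e j)%N.
lia.
Qed.

Local Open Scope ring_scope.

Lemma cw_bound (R : realType) (n : nat) (A : 'M[R]_n) (w : 'I_n -> R) (b : R) :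
  (forall i j, 0 <= A i j) -> (forall i, 0 < w i) ->
  (forall j, \sum_i w i * A i j <= b * w j) ->
  forall a, eigenvalue A a -> a <= b.
Proof.
move=> hA hw hb a /eigenvalueP [v hv hv0].
have [i0 hi0] : exists i0, v 0 i0 != 0.
  apply/existsP; apply: contraNT hv0; rewrite negb_exists => /forallP h.
  apply/eqP/rowP => i; rewrite mxE; exact/eqP/negbNE/h.
pose F := fun j => `|v 0 j| / w j.
case: (@arg_maxP _ _ _ i0 xpredT F isT) => j _ hj.
have Fpos : 0 < F j.
  apply: lt_le_trans (hj i0 isT); rewrite /F divr_gt0 // normr_gt0 //.
have hvj : `|v 0 j| = F j * w j by rewrite /F mulrVK // unitfE gt_eqF.
have hvi : forall i, `|v 0 i| <= F j * w i.
  move=> i; have := hj i isT; rewrite /F /= ler_pdivrMr // mulrAC.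
have heq : a * v 0 j = \sum_i v 0 i * A i j.
  by have := congr1 (fun M : 'rV[R]_n => M 0 j) hv; rewrite !mxE => <-.
have h1 : `|a| * `|v 0 j| <= F j * (b * w j).
  rewrite -normrM heq; apply: le_trans (ler_norm_sum _ _ _) _.
  apply: le_trans (_ : \sum_i F j * (w i * A i j) <= _).
    apply: ler_sum => i _; rewrite normrM (ger0_norm (hA i j)) mulrA.
    by apply: ler_wpM2r => //; exact: hvi.
  by rewrite -mulr_sumr ler_wpM2l // ltW.
rewrite hvj mulrCA in h1.
have hp : 0 < F j * w j by rewrite mulr_gt0.
have : `|a| <= b.
  by move: h1; rewrite ler_pM2l // ler_pM2r.
by apply: le_trans; exact: ler_norm.
Qed.

Lemma ev_exact (R : realType) (n : nat) (A : 'M[R]_n) (w : 'I_n -> R) (b : R) i0 :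
  w i0 != 0 -> (forall j, \sum_i w i * A i j = b * w j) -> eigenvalue A b.
Proof.
move=> hi0 hb; apply/eigenvalueP; exists (\row_i w i).
  apply/rowP => j; rewrite !mxE -hb; apply: eq_bigr => i _; by rewrite mxE.
apply/negP => /eqP h; move: hi0; have := congr1 (fun M : 'rV[R]_n => M 0 i0) h.
by rewrite !mxE => ->; rewrite eqxx.
Qed.

Lemma largest_le (R : realType) (n : nat) (A : 'M[R]_n) (b : R) :
  0 <= b -> (forall a, eigenvalue A a -> a <= b) -> largest_eig A <= b.
Proof.
move=> hb0 hb; rewrite /largest_eig.
have [[a ha]|hne] := pselect ([set a : R | eigenvalue A a] !=set0)%classic.
  by apply: ge_sup; [exists a | move=> x; exact: hb].
suff -> : [set a : R | eigenvalue A a]%classic = set0%classic by rewrite sup0.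
apply/seteqP; split => x //= hx; apply: hne; by exists x.
Qed.

Lemma largest_eq (R : realType) (n : nat) (A : 'M[R]_n) (b : R) :
  eigenvalue A b -> (forall a, eigenvalue A a -> a <= b) -> largest_eig A = b.
Proof.
move=> hb hall; apply/eqP; rewrite eq_le; apply/andP; split.
  by apply: ge_sup; [exists b | move=> x; exact: hall].
by apply: ub_le_sup => //; exists b => x; exact: hall.
Qed.

Lemma b1_lt (R : rcfType) (N : R) : 2 <= N ->
  (2 * N - 2 - Num.sqrt (4 * N ^+ 2 - 12 * N + 12)) / 2 < 1 / 2.
Proof.
move=> hN.
have h : 2 * N - 3 < Num.sqrt (4 * N ^+ 2 - 12 * N + 12).
  have -> : 2 * N - 3 = Num.sqrt ((2 * N - 3) ^+ 2) by rewrite sqrtr_sqr ger0_norm //; lra.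
  rewrite ltr_sqrt; first by nra.
  nra.
lra.
Qed.

Lemma b2_lt (R : rcfType) (N : R) : 2 <= N ->
  (3 * N - 4 - Num.sqrt (9 * N ^+ 2 - 32 * N + 32)) / 2 < 3 / 4.
Proof.
move=> hN.
have h : 3 * N - 11 / 2 < Num.sqrt (9 * N ^+ 2 - 32 * N + 32).
  have -> : 3 * N - 11 / 2 = Num.sqrt ((3 * N - 11 / 2) ^+ 2) by rewrite sqrtr_sqr ger0_norm //; lra.
  rewrite ltr_sqrt; first by nra.
  nra.
lra.
Qed.

Lemma star_lam (R : rcfType) (N : R) : 2 <= N ->
  let s := Num.sqrt (N ^+ 2 - 3 * N + 3) in
  let l := N - 2 + s in
  [/\ 0 < l, l * l = (N - 1) + 2 * (N - 2) * l &
      (2 * N - 3) - l = (2 * N - 2 - Num.sqrt (4 * N ^+ 2 - 12 * N + 12)) / 2].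
Proof.
move=> hN s l.
have hX : 0 < N ^+ 2 - 3 * N + 3 by nra.
have hs : s ^+ 2 = N ^+ 2 - 3 * N + 3 by rewrite sqr_sqrtr // ltW.
have hs0 : 0 < s by rewrite sqrtr_gt0.
split.
- rewrite /l; lra.
- rewrite /l; nra.
- have -> : 4 * N ^+ 2 - 12 * N + 12 = 2 ^+ 2 * (N ^+ 2 - 3 * N + 3) by ring.
  rewrite sqrtrM ?sqrtr_sqr ?ger0_norm //; last by nra.
  rewrite -/s /l; lra.
Qed.

Lemma star_mu (R : rcfType) (N : R) : 2 <= N ->
  let t := Num.sqrt (9 * N ^+ 2 - 32 * N + 32) in
  let m := (5 * N - 8 + t) / 2 in
  [/\ 0 < m - (N - 1), (N - 1) * (N - 1) + (N - 1) * (m - (N - 1)) = m * (N - 1),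
      (m - (N - 1)) * (2 * N - 3) + (N - 1) + 2 * (N - 2) * (m - (N - 1)) = m * (m - (N - 1)) &
      2 * (2 * N - 3) - m = (3 * N - 4 - t) / 2].
Proof.
move=> hN t m.
have hY : 0 < 9 * N ^+ 2 - 32 * N + 32 by nra.
have ht : t ^+ 2 = 9 * N ^+ 2 - 32 * N + 32 by rewrite sqr_sqrtr // ltW.
have ht0 : 0 < t by rewrite sqrtr_gt0.
split.
- rewrite /m; lra.
- rewrite /m; ring.
- rewrite /m; nra.
- rewrite /m; lra.
Qed.

Lemma distE (R : realType) {n : nat} (e : rel 'I_n) i j :
  dist_mx R e i j = (gdist e i j)%:R.
Proof. by rewrite mxE. Qed.

Lemma distQ_col (R : realType) {n : nat} (e : rel 'I_n) (w : 'I_n -> R) j :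
  \sum_i w i * distQ_mx R e i j =
  \sum_i w i * (gdist e i j)%:R + w j * (transmission e j)%:R.
Proof.
rewrite /distQ_mx (eq_bigr (fun i => w i * (gdist e i j)%:R +
   w i * ((transmission e i)%:R *+ (i == j)))); last first.
  by move=> i _; rewrite !mxE mulrDr.
rewrite big_split /=; congr (_ + _).
rewrite (bigD1 j) //= eqxx mulr1n big1 ?addr0 // => i /negbTE ->.
by rewrite mulr0n mulr0.
Qed.

Lemma nonneg_entries (R : realType) {n : nat} (e : rel 'I_n) :
  (forall i j, 0 <= dist_mx R e i j) /\ (forall i j, 0 <= distQ_mx R e i j).
Proof.
split => i j; rewrite !mxE //; apply: addr_ge0 => //.
by apply: mulrn_wge0.
Qed.

Lemma nonstar_bounds (R : realType) {n : nat} {e : rel 'I_n} :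
  is_tree e -> (2 <= n)%N -> ~ graph_iso e (@star_rel n) ->
  largest_eig (dist_mx R e) <= (Dmax e)%:R - 1 / 2 /\
  largest_eig (distQ_mx R e) <= 2 * (Dmax e)%:R - 3 / 4.
Proof.
move=> ht hn hni.
have [hD0 hQ0] := nonneg_entries R e.
pose w := fun i => ((transmission e i)%:R : R).
have hw : forall i, 0 < w i by move=> i; rewrite /w ltr0n trans_pos.
have hM1 : (1 <= Dmax e)%N.
  have h0 : (0 < n)%N by apply: ltnW.
  exact: leq_trans (trans_pos (Ordinal h0) ht hn) (trans_le_max e _).
have hM1R : 1 <= ((Dmax e)%:R : R) by rewrite ler1n.
have colD : forall j, \sum_i w i * dist_mx R e i j =
   ((\sum_(i < n) transmission e i * gdist e i j)%N)%:R.
  by move=> j; rewrite natr_sum; apply: eq_bigr => i _; rewrite distE natrM.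
split.
  apply: largest_le; first lra.
  apply: (@cw_bound R n (dist_mx R e) w _ hD0 hw) => j; rewrite colD.
  have := colD_nat j ht hn hni; rewrite -(ler_nat R) !natrD !natrM.
  rewrite /w; set X := ((\sum_(i < n) _)%N)%:R; set t := (transmission e j)%:R.
  set m := (Dmax e)%:R; move=> h; nra.
apply: largest_le; first lra.
apply: (@cw_bound R n (distQ_mx R e) w _ hQ0 hw) => j; rewrite distQ_col.
rewrite (_ : \sum_i w i * (gdist e i j)%:R = \sum_i w i * dist_mx R e i j); last first.
  by apply: eq_bigr => i _; rewrite distE.
rewrite colD.
have := colQ_nat j ht hn hni; rewrite -(ler_nat R) !natrD !natrM.
rewrite /w; set X := ((\sum_(i < n) _)%N)%:R; set t := (transmission e j)%:R.
set m := (Dmax e)%:R; move=> h; nra.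
Qed.

Lemma star_bounds (R : realType) {n : nat} {e : rel 'I_n} c :
  is_tree e -> (2 <= n)%N ->
  (forall x y, e x y = (x != y) && ((x == c) || (y == c))) ->
  let N : R := n%:R in
  largest_eig (dist_mx R e) = N - 2 + Num.sqrt (N ^+ 2 - 3 * N + 3) /\
  largest_eig (distQ_mx R e) = (5 * N - 8 + Num.sqrt (9 * N ^+ 2 - 32 * N + 32)) / 2.
Proof.
move=> ht hn he N.
have [hD0 hQ0] := nonneg_entries R e.
have hN : 2 <= N by rewrite /N (ler_nat R 2 n).
have hn1 : ((n - 1)%N%:R : R) = N - 1 by rewrite natrB //; apply: ltnW.
have hn2 : ((n - 2)%N%:R : R) = N - 2 by rewrite natrB.
have [hTc hTx] := trans_star c ht he.
have hds := gdist_star c ht he.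
split.
  case: (@star_lam R N hN) => /=; set l := N - 2 + _ => hl0 hll _.
  pose w := fun i : 'I_n => if i == c then N - 1 else l.
  have hw : forall i, 0 < w i.
    by move=> i; rewrite /w; case: (i == c) => //; lra.
  have hcol : forall j, \sum_i w i * dist_mx R e i j = l * w j.
    move=> j; case: (eqVneq j c) => [->|hjc].
      rewrite (sumr_star2 R c _ l) => [|i hic].
        by rewrite distE hds /dstar eqxx mulr0 add0r /w eqxx -mulr_natr hn1.
      by rewrite distE hds /dstar (negbTE hic) eqxx /w (negbTE hic) mulr1.
    rewrite (sumr_star3 R c j _ (l * 2)) // => [|i hij hic].
      rewrite !distE !hds /dstar eqxx mulr0 add0r eq_sym (negbTE hjc) eqxx /= mulr1.
      rewrite /w eqxx (negbTE hjc) -[l * 2 *+ (n - 2)]mulr_natr hn2 hll; lra.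
    by rewrite distE hds /dstar (negbTE hij) (negbTE hic) (negbTE hjc) /w (negbTE hic).
  apply: largest_eq.
    apply: (@ev_exact R n (dist_mx R e) w l c); first by rewrite gt_eqF.
    exact: hcol.
  apply: (@cw_bound R n (dist_mx R e) w _ hD0 hw) => j; by rewrite hcol mulrC.
case: (@star_mu R N hN) => /=; set m := (5 * N - 8 + _) / 2 => hv hc1 hc2 _.
set v := m - (N - 1) in hv hc1 hc2.
pose w := fun i : 'I_n => if i == c then N - 1 else v.
have hw : forall i, 0 < w i.
  by move=> i; rewrite /w; case: (i == c) => //; lra.
have hcol : forall j, \sum_i w i * distQ_mx R e i j = m * w j.
  move=> j; rewrite distQ_col; case: (eqVneq j c) => [->|hjc].
    rewrite (sumr_star2 R c _ v) => [|i hic].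
      rewrite hds /dstar eqxx mulr0 add0r /w eqxx -[v *+ (n - 1)]mulr_natr hn1 hTc hn1.
      by rewrite -hc1; ring.
    by rewrite hds /dstar (negbTE hic) eqxx /w (negbTE hic) mulr1.
  rewrite (sumr_star3 R c j _ (v * 2)) // => [|i hij hic].
    rewrite !hds /dstar eqxx mulr0 add0r eq_sym (negbTE hjc) eqxx /= mulr1.
    rewrite /w eqxx (negbTE hjc) -[v * 2 *+ (n - 2)]mulr_natr hn2 (hTx j hjc) natrD natrM hn2.
    rewrite -hc2; lra.
  by rewrite hds /dstar (negbTE hij) (negbTE hic) (negbTE hjc) /w (negbTE hic).
apply: largest_eq.
  apply: (@ev_exact R n (distQ_mx R e) w m c); first by rewrite gt_eqF.
  exact: hcol.
apply: (@cw_bound R n (distQ_mx R e) w _ hQ0 hw) => j; by rewrite hcol mulrC.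
Qed.

Theorem theorem2 (R : realType) (n : nat) (e : rel 'I_n) :
  (2 <= n)%N -> is_tree e ->
  let d := (Dmax e)%:R - largest_eig (dist_mx R e) in
  let q := 2 * (Dmax e)%:R - largest_eig (distQ_mx R e) in
  let b1 := (2 * n%:R - 2 - Num.sqrt (4 * n%:R ^+ 2 - 12 * n%:R + 12)) / 2 : R in
  let b2 := (3 * n%:R - 4 - Num.sqrt (9 * n%:R ^+ 2 - 32 * n%:R + 32)) / 2 : R in
  [/\ b1 <= d, b2 <= q,
      d = b1 <-> graph_iso e (@star_rel n)
    & q = b2 <-> graph_iso e (@star_rel n)].
Proof.
move=> hn ht d q b1 b2.
have hN : (2 : R) <= n%:R by rewrite (ler_nat R 2 n).
case: (pselect (graph_iso e (@star_rel n))) => hiso.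
  have h0 : (0 < n)%N by apply: ltnW.
  case: (iso_center hiso h0) => c he.
  have hM := Dmax_star c ht hn he.
  have [hD hQ] := star_bounds R c ht hn he.
  case: (@star_lam R n%:R hN) => _ _ hl.
  case: (@star_mu R n%:R hN) => _ _ _ hm.
  have hMR : ((Dmax e)%:R : R) = 2 * n%:R - 3.
    by rewrite hM natrD natrM natrB //; lra.
  have e1 : d = b1 by rewrite /d /b1 hD hMR; exact: hl.
  have e2 : q = b2 by rewrite /q /b2 hQ hMR; exact: hm.
  by split; [rewrite e1 | rewrite e2 | split | split].
have [hD hQ] := nonstar_bounds R ht hn hiso.
have h1 := @b1_lt R n%:R hN; have h2 := @b2_lt R n%:R hN.
have l1 : b1 < d by rewrite /d /b1; lra.
have l2 : b2 < q by rewrite /q /b2; lra.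
split; [exact: ltW | exact: ltW | split => // h | split => // h].
  by move: l1; rewrite h ltxx.
by move: l2; rewrite h ltxx.
Qed.
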